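(* For all integers $k\ge1$ and $n\ge0$, \[ ov_k(n) = nov_k(n) - nov_{2k}(n). \]
   Context: An overpartition of $n$ is a non-increasing sequence of positive integers summing to $n$ in which the first occurrence of each integer may be overlined. For $j\ge1$, $nov_j(n)$ denotes the sum of all non-overlined parts divisible by $j$, summed over all overpartitions of $n$, and $ov_j(n)$ denotes the sum of all overlined parts divisible by $j$, summed over all overpartitions of $n$. *)

(* Defs.v *)
From mathcomp Require Import all_boot all_order all_algebra.
Set Implicit Arguments. Unset Strict Implicit. Unset Printing Implicit Defensive.

(* An overpartition is represented as a sequence of pairs (part, overlined?). *)
Definition ovpart := (nat * bool)%type.

(* s is an overpartition of n: parts positive, non-increasing, summing to n,
   and an overlined part is always the first occurrence of its value. *)
Definition is_overpartition (n : nat) (s : seq ovpart) : bool :=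
  [&& all (fun x => 0 < x.1) s,
      sorted geq (map fst s),
      sumn (map fst s) == n &
      all (fun i => (nth (0, false) s i).2 ==>
                    ((i == 0) || ((nth (0, false) s i.-1).1 != (nth (0, false) s i).1)))
          (iota 0 (size s))].

Definition nov_parts (j : nat) (s : seq ovpart) : nat :=
  \sum_(x <- s | ~~ x.2 && (j %| x.1)) x.1.
Definition ov_parts (j : nat) (s : seq ovpart) : nat :=
  \sum_(x <- s | x.2 && (j %| x.1)) x.1.

(* Every overpartition of n
   has length at most n and parts at most n, so it arises from exactly one
   pair (m, t) with m < n.+1 and t : m.-tuple ('I_n.+1 * bool). *)
Definition ovp_of_tuple (n m : nat) (t : m.-tuple ('I_n.+1 * bool)) : seq ovpart :=
  [seq (nat_of_ord x.1, x.2) | x <- t].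

Definition sum_overpartitions (n : nat) (F : seq ovpart -> nat) : nat :=
  \sum_(m < n.+1) \sum_(t : m.-tuple ('I_n.+1 * bool)
                        | is_overpartition n (ovp_of_tuple t))
     F (ovp_of_tuple t).

Definition nov (j n : nat) : nat := sum_overpartitions n (nov_parts j).
Definition ov (j n : nat) : nat := sum_overpartitions n (ov_parts j).

(* Main.v *)
Require Import Defs.
From mathcomp Require Import all_boot all_order all_algebra zify.

Definition lc (x y : ovpart) : bool := (y.1 <= x.1) && (y.2 ==> (x.1 != y.1)).
Definition rr (x y : ovpart) : bool := (y.1 < x.1) || ((x.1 == y.1) && (y.2 ==> x.2)).

Lemma lc_trans : transitive lc.
Proof. move=> [a b] [c d] [e f]; rewrite /lc /=; case: b; case: d; case: f => /=; lia. Qed.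
Lemma rr_trans : transitive rr.
Proof. move=> [a b] [c d] [e f]; rewrite /rr /=; case: b; case: d; case: f => /=; lia. Qed.
Lemma rr_total : total rr.
Proof. move=> [a b] [c d]; rewrite /rr /=; case: b; case: d => /=; lia. Qed.
Lemma rr_anti : antisymmetric rr.
Proof. move=> [a b] [c d]; rewrite /rr /=; case: b; case: d => /= H; f_equal; lia. Qed.
Lemma lc_rr x y : lc x y -> rr x y.
Proof. case: x y => [a b] [c d]; rewrite /rr /lc /=; case: b; case: d => /=; lia. Qed.

Lemma lc_uniq s : sorted lc s -> uniq [seq x <- s | x.2].
Proof.
elim: s => //= x s IH Hp.
have Hs : sorted lc s := path_sorted Hp.
have Ha := order_path_min lc_trans Hp.
case: ifP => Hx; last exact: IH.
rewrite /= IH // andbT mem_filter negb_and; apply/orP; right.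
apply/negP => xs; move/allP: Ha => /(_ _ xs); rewrite /lc Hx eqxx /=. by rewrite andbF.
Qed.

Lemma rr_lc s : sorted rr s -> uniq [seq x <- s | x.2] -> sorted lc s.
Proof.
elim: s => [|x [|y s] IH] //= /andP [Hxy Hp] Hu.
have Hu' : uniq [seq x <- y :: s | x.2].
  by move: Hu; case: (x.2) => //= /andP [].
have := IH Hp Hu'; rewrite /= => ->; rewrite andbT; clear IH Hp Hu'.
move: Hxy Hu; case: x => a b; case: y => c d; rewrite /rr /lc /=.
case: d => /=; last by lia.
case: b => /=; last by lia.
case: (ltnP c a) => H1 /=; first by lia.
move=> H2; have Eac : a = c by lia. subst.
by rewrite inE eqxx.
Qed.

Definition Cnd (s : seq ovpart) :=
  all (fun i => (nth (0, false) s i).2 ==>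
                    ((i == 0) || ((nth (0, false) s i.-1).1 != (nth (0, false) s i).1)))
          (iota 0 (size s)).

Lemma Cnd_cons2 x y t : Cnd [:: x, y & t] = (y.2 ==> (x.1 != y.1)) && Cnd (y :: t).
Proof.
rewrite /Cnd /= !implybT /=; case: (_ ==> _) => //=.
rewrite -(addn1 1) iotaDl -[in RHS](addn0 1) iotaDl !all_map.
apply: eq_in_all => i; rewrite mem_iota => /andP [Hi _] /=.
by case: i Hi.
Qed.

Lemma Cnd_1 x : Cnd [:: x].
Proof. by rewrite /Cnd /=; case: (x.2). Qed.

Lemma op_char n s : is_overpartition n s =
  [&& all (fun x => 0 < x.1) s, sorted lc s & sumn (map fst s) == n].
Proof.
rewrite /is_overpartition; case: (all _ s) => //=.
case: (sumn _ == n); rewrite ?andbF ?andbT //.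
rewrite -/(Cnd s). elim: s => // x s; case: s => [|y t] IH.
  by rewrite Cnd_1.
rewrite Cnd_cons2; move: IH; rewrite /= => <-; rewrite /lc /=. by case: (y.1 <= x.1); case: (y.2 ==> _); case: (path _ _ _); case: (Cnd _).
Qed.

Definition Em n m := map (@ovp_of_tuple n m) (index_enum (m.-tuple ('I_n.+1 * bool))).
Definition E n := flatten [seq Em n m | m <- iota 0 n.+1].

Lemma S_conv n F : sum_overpartitions n F = \sum_(s <- E n | is_overpartition n s) F s.
Proof.
rewrite /sum_overpartitions /E big_flatten big_map /=.
rewrite -(big_mkord xpredT (fun m => \sum_(t : m.-tuple ('I_n.+1 * bool) | is_overpartition n (ovp_of_tuple t)) F (ovp_of_tuple t))).
rewrite /index_iota subn0. apply: eq_bigr => m _. by rewrite /Em big_map.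
Qed.

Lemma size_ovp n m (t : m.-tuple ('I_n.+1 * bool)) : size (ovp_of_tuple t) = m.
Proof. by rewrite /ovp_of_tuple size_map size_tuple. Qed.

Arguments size_ovp {n m}.
Lemma Em_uniq n m : uniq (Em n m).
Proof.
rewrite /Em map_inj_uniq ?index_enum_uniq //.
move=> t1 t2; rewrite /ovp_of_tuple => /inj_map H; apply: val_inj; apply: H.
by move=> [a b] [c d] /= [/val_inj -> ->].
Qed.

Lemma E_uniq_gen n a b : uniq (flatten [seq Em n m | m <- iota a b]).
Proof.
elim: b a => //= b IH a. rewrite cat_uniq Em_uniq IH andbT /=.
apply/hasPn => s /flattenP [l /mapP [m]]; rewrite mem_iota => /andP [Hm _] -> /mapP [t _ ->].
apply/negP => /mapP [t' _ Ht]. have := size_ovp t. rewrite Ht size_ovp. lia.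
Qed.

Lemma size_le_sum (s : seq ovpart) : all (fun x => 0 < x.1) s -> size s <= sumn (map fst s).
Proof. elim: s => //= x s IH /andP [H1 H2]; have := IH H2; lia. Qed.

Lemma part_le_sum {s : seq ovpart} {x} : x \in s -> x.1 <= sumn (map fst s).
Proof. elim: s => //= y s IH; rewrite inE => /orP [/eqP -> | /IH]; lia. Qed.

Lemma E_mem n s : is_overpartition n s -> s \in E n.
Proof.
move=> Hs; have Hs' := Hs; move: Hs'; rewrite /is_overpartition => /and4P [Hpos _ /eqP Hsum _].
pose t := map_tuple (fun x : ovpart => ((inord x.1 : 'I_n.+1), x.2)) (in_tuple s).
have Ht : ovp_of_tuple t = s.
  rewrite /ovp_of_tuple /= -map_comp; apply: map_id_in => x xs /=.
  rewrite inordK; first by case: x xs.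
  rewrite ltnS -Hsum; exact: part_le_sum xs.
apply/flattenP; exists (Em n (size s)).
  apply/mapP; exists (size s) => //; rewrite mem_iota /=. rewrite ltnS -Hsum; exact: size_le_sum.
apply/mapP; exists t => //; by rewrite mem_index_enum.
Qed.

Definition L n := [seq s <- E n | is_overpartition n s].

Lemma L_uniq n : uniq (L n).
Proof. by rewrite filter_uniq // /E E_uniq_gen. Qed.

Lemma mem_L n s : (s \in L n) = is_overpartition n s.
Proof. rewrite mem_filter; apply/andP/idP => [[]//|H]; split => //; exact: E_mem. Qed.

Lemma S_L n F : sum_overpartitions n F = \sum_(s <- L n) F s.
Proof. by rewrite S_conv big_filter. Qed.

Lemma Lop {n s} : s \in L n -> is_overpartition n s.
Proof. by rewrite mem_L. Qed.
Lemma opL {n s} : is_overpartition n s -> s \in L n.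
Proof. by rewrite mem_L. Qed.

Lemma sum_bij n m (P Q : pred (seq ovpart)) (f g : seq ovpart -> seq ovpart) (F : seq ovpart -> nat) :
 (forall s, is_overpartition n s -> P s -> [/\ is_overpartition m (f s), Q (f s) & g (f s) = s]) ->
 (forall s, is_overpartition m s -> Q s -> [/\ is_overpartition n (g s), P (g s) & f (g s) = s]) ->
 \sum_(s <- L n | P s) F s = \sum_(s <- L m | Q s) F (g s).
Proof.
move=> Hf Hg. rewrite -big_filter -[RHS]big_filter -(big_map g xpredT F).
apply: perm_big. apply: uniq_perm.
- exact: filter_uniq (L_uniq _).
- rewrite map_inj_in_uniq; first exact: filter_uniq (L_uniq _).
  move=> s1 s2; rewrite !mem_filter => /andP [q1 /andP [o1 _]] /andP [q2 /andP [o2 _]] E.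
  have [_ _ <-] := Hg _ o1 q1. have [_ _ <-] := Hg _ o2 q2. by rewrite E.
- move=> s; rewrite !mem_filter. apply/andP/mapP.
  + move=> [ps /andP [os _]]. have [om qm gf] := Hf _ os ps. exists (f s) => //.
    by rewrite !mem_filter qm om E_mem.
  + move=> [s']; rewrite !mem_filter => /andP [q /andP [o _]] ->.
    have [? ? _] := Hg _ o q. by split => //; rewrite E_mem ?andbT.
Qed.

Definition ins (x : ovpart) s := sort rr (x :: s).

Lemma perm_ins (x : ovpart) s : perm_eq (ins x s) (x :: s).
Proof. by rewrite /ins perm_sort. Qed.

Lemma sum_rem {x : ovpart} {s} : x \in s -> sumn (map fst s) = x.1 + sumn (map fst (rem x s)).
Proof. move=> xs. have := perm_sumn (perm_map fst (perm_to_rem xs)). by rewrite /= => ->. Qed.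

Lemma rem_op n (x : ovpart) s : is_overpartition n s -> x \in s -> is_overpartition (n - x.1) (rem x s).
Proof.
rewrite !op_char => /and3P [Hp Hs /eqP Hn] xs; apply/and3P; split.
- apply/allP => y /mem_rem ys. exact: (allP Hp).
- exact: (@subseq_sorted _ lc lc_trans _ _ (rem_subseq x s) Hs).
- apply/eqP. rewrite -Hn (sum_rem xs). by rewrite addKn.
Qed.

Lemma ins_op n (x : ovpart) s : is_overpartition n s -> 0 < x.1 -> (x.2 -> x \notin s) ->
  is_overpartition (n + x.1) (ins x s).
Proof.
rewrite !op_char => /and3P [Hp Hs /eqP Hn] Hx Hnot; apply/and3P; split.
- apply/allP => y; rewrite mem_sort inE => /orP [/eqP -> // | ys]. exact: (allP Hp).
- apply: rr_lc; first exact: sort_sorted rr_total _.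
  rewrite (perm_uniq (perm_filter _ (perm_ins x s))) /=.
  case Ex: (x.2) => /=; last exact: lc_uniq.
  rewrite lc_uniq // andbT mem_filter negb_and Hnot ?orbT //.
- apply/eqP. rewrite (perm_sumn (perm_map fst (perm_ins x s))) /= Hn. lia.
Qed.

Lemma ins_rem n (x : ovpart) s : is_overpartition n s -> x \in s -> ins x (rem x s) = s.
Proof.
rewrite op_char => /and3P [_ Hs _] xs.
apply: (@sorted_eq _ rr rr_trans rr_anti); first exact: sort_sorted rr_total _.
  exact: (@sub_sorted _ lc rr lc_rr _ Hs).
rewrite perm_sort perm_sym. exact: perm_to_rem.
Qed.

Lemma rem_ins n (x : ovpart) s : is_overpartition n s -> rem x (ins x s) = s.
Proof.
rewrite op_char => /and3P [_ Hs _].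
apply: (@sorted_eq _ rr rr_trans rr_anti).
- exact: (@subseq_sorted _ rr rr_trans _ _ (rem_subseq _ _) (sort_sorted rr_total _)).
- exact: (@sub_sorted _ lc rr lc_rr _ Hs).
have xi : x \in ins x s by rewrite mem_sort mem_head.
have H1 := perm_to_rem xi.
have H2 := perm_ins x s.
rewrite perm_sym in H1. by rewrite -(perm_cons x) (perm_trans H1 H2).
Qed.

Lemma count_ins (x y : ovpart) s : count_mem y (ins x s) = (x == y) + count_mem y s.
Proof. by rewrite (permP (perm_ins x s)) /=. Qed.

Lemma cntT_le n v s : is_overpartition n s -> count_mem (v, true) s <= 1.
Proof.
rewrite op_char => /and3P [_ Hs _].
have -> : count_mem (v, true) s = count_mem (v, true) [seq x <- s | x.2].
  rewrite count_filter; apply: eq_count => -[a b] /=. by case: b; rewrite ?andbT ?andbF //; rewrite xpair_eqE andbF.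
by rewrite count_uniq_mem ?lc_uniq //; case: (_ \in _).
Qed.

Arguments rem_op {n x s}.
Arguments ins_op {n} x {s}.
Arguments ins_rem {n x s}.
Arguments rem_ins {n} x {s}.
Arguments cntT_le {n} v {s}.
Definition A n := \sum_(s <- L n) 1.
Definition N v n := \sum_(s <- L n) count_mem (v, false) s.
Definition O v n := \sum_(s <- L n) count_mem (v, true) s.

Lemma cnt_small n v b s : n < v -> is_overpartition n s -> count_mem (v, b) s = 0.
Proof.
move=> Hnv; rewrite op_char => /and3P [_ _ /eqP Hn].
apply/count_memPn/negP => H. have := part_le_sum H. rewrite Hn /=. lia.
Qed.

Lemma N_small n v : n < v -> N v n = 0.
Proof. move=> H; rewrite /N big1_seq // => s /andP [_ /Lop o]; exact: cnt_small H o. Qed.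
Lemma O_small n v : n < v -> O v n = 0.
Proof. move=> H; rewrite /O big1_seq // => s /andP [_ /Lop o]; exact: cnt_small H o. Qed.

Lemma N_rec n v : 0 < v -> v <= n -> N v n = N v (n - v) + A (n - v).
Proof.
move=> v0 vn; rewrite /N /A.
rewrite (bigID (fun s => (v, false) \in s)) /=.
rewrite [X in _ + X]big1 ?addn0; last by move=> s /count_memPn.
rewrite (sum_bij n (n - v) (fun s => (v, false) \in s) xpredT (rem (v, false)) (ins (v, false))).
- rewrite -big_split /=; apply: eq_bigr => s _. by rewrite count_ins eqxx addnC.
- move=> s o xs; split => //. 
  + by have := rem_op o xs.
  + by have := ins_rem o xs.
- move=> s o _; split.
  + have := ins_op (v, false) o v0 (fun h => ltac:(by [])).
    by rewrite /= subnK.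
  + by rewrite /ins mem_sort mem_head.
  + by have := rem_ins (v, _) o.
Qed.

Lemma cntT_mem n v s : is_overpartition n s -> count_mem (v, true) s = ((v, true) \in s).
Proof.
move=> o; have := cntT_le v o. case: (boolP ((v,true) \in s)) => H.
  rewrite -has_pred1 has_count in H. move: H; lia.
by move/count_memPn: H => ->.
Qed.

Lemma O_rec n v : 0 < v -> v <= n -> O v n + O v (n - v) = A (n - v).
Proof.
move=> v0 vn; rewrite /O /A.
have E m : \sum_(s <- L m) count_mem (v, true) s = \sum_(s <- L m | (v, true) \in s) 1.
  rewrite [RHS]big_mkcond /=; apply: eq_big_seq => s /Lop o. by rewrite (cntT_mem _ v _ o); case: (_ \in _).
rewrite !E.
rewrite (sum_bij n (n - v) (fun s => (v, true) \in s) (fun s => (v, true) \notin s) (rem (v, true)) (ins (v, true))).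
- by rewrite [RHS](bigID (fun s => (v, true) \in s)) /= addnC.
- move=> s o xs; split => //. 
  + by have := rem_op o xs.
  + apply/negP => H. have := perm_to_rem xs. move/permP => /(_ (pred1 (v, true))) /=.
    rewrite eqxx. have := cntT_le v o. rewrite -has_pred1 has_count in H. move=> h1 h2. rewrite h2 /= add1n ltnS leqn0 in h1. by rewrite (eqP h1) in H.
  + by have := ins_rem o xs.
- move=> s o xs; split.
  + have := ins_op (v, true) o v0 (fun _ => xs).
    by rewrite /= subnK.
  + by rewrite /ins mem_sort mem_head.
  + by have := rem_ins (v, _) o.
Qed.

Lemma key v n : 0 < v -> O v n + 2 * N (2 * v) n = N v n.
Proof.
move=> v0; elim/ltn_ind: n => n IH.
case: (ltnP n v) => Hnv.
  rewrite O_small // (N_small n v) // (N_small n (2 * v)); lia.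
case: (ltnP n (2 * v)) => Hn2.
  rewrite (N_small n (2 * v)) // N_rec //.
  have H1 := O_rec n v v0 Hnv. have H2 : O v (n - v) = 0 by apply: O_small; lia. have H3 : N v (n - v) = 0 by apply: N_small; lia. lia.
have E : n - v - v = n - 2 * v by lia.
rewrite (N_rec n v) // (N_rec n (2 * v)); [|lia|lia].
rewrite (N_rec (n - v) v) ; [| lia | lia].
have := O_rec n v v0 Hnv. have := O_rec (n - v) v v0 (ltac:(lia)).
have := IH (n - v - v) (ltac:(lia)). rewrite !E. lia.
Qed.

Lemma single (b : bool) (j B a : nat) (c : bool) (aB : a < B) : (if (c == b) && (j %| a) then a else 0) =
  \sum_(v < B | j %| v) v * ((a, c) == ((v : nat), b)).
Proof.
case: (eqVneq c b) => [->|cb]; rewrite ?eqxx ?andTb.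
  case: (boolP (j %| a)) => ja.
    rewrite (bigD1 (Ordinal aB)) // eqxx muln1 big1 => [|i /andP [_ ia]]; first by rewrite /= addn0.
    rewrite xpair_eqE eqxx andbT. case: (eqVneq a (nat_of_ord i)) => [E|E]; last by rewrite muln0.
    by move: ia; rewrite -val_eqE /= -E eqxx.
  symmetry; apply: big1 => i ji. rewrite xpair_eqE eqxx andbT. case: (eqVneq a (nat_of_ord i)) => [E|E]; last by rewrite muln0.
  by move: ji ja; rewrite -E => ->.
symmetry; apply: big1 => i _. rewrite xpair_eqE. by rewrite (negbTE cb) andbF muln0.
Qed.

Lemma parts_dec b j B (s : seq ovpart) : all (fun x => x.1 < B) s ->
  \sum_(x <- s | (x.2 == b) && (j %| x.1)) x.1 = \sum_(v < B | j %| v) v * count_mem ((v : nat), b) s.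
Proof.
elim: s => [|x s IH] /=.
  by move=> _; rewrite big_nil big1 // => i _; rewrite muln0.
move=> /andP [xB Hs]. rewrite big_cons.
have -> : forall (c : bool) (a r : nat), (if c then a + r else r) = (if c then a else 0) + r by case.
rewrite IH //.
under [RHS]eq_bigr do rewrite mulnDr.
rewrite big_split /=; congr (_ + _).
case: x xB => a c aB. exact: single.
Qed.

Lemma parts_lt {n B s} : n < B -> is_overpartition n s -> all (fun x : ovpart => x.1 < B) s.
Proof.
move=> nB; rewrite op_char => /and3P [_ _ /eqP Hn]. apply/allP => x xs.
apply: leq_ltn_trans nB; rewrite -Hn; exact: part_le_sum xs.
Qed.

Lemma nov_dec j n B : n < B -> nov j n = \sum_(v < B | j %| v) v * N v n.
Proof.
move=> nB; rewrite /nov S_L /N.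
rewrite (eq_big_seq (fun s => \sum_(v < B | j %| v) v * count_mem ((v : nat), false) s)); last first.
  move=> s /Lop o. rewrite -(parts_dec false j B s (parts_lt nB o)) /nov_parts.
  apply: eq_bigl => x. by case: (x.2).
rewrite exchange_big /=. apply: eq_bigr => v _. by rewrite big_distrr.
Qed.

Lemma ov_dec j n B : n < B -> ov j n = \sum_(v < B | j %| v) v * O v n.
Proof.
move=> nB; rewrite /ov S_L /O.
rewrite (eq_big_seq (fun s => \sum_(v < B | j %| v) v * count_mem ((v : nat), true) s)); last first.
  move=> s /Lop o. rewrite -(parts_dec true j B s (parts_lt nB o)) /ov_parts.
  apply: eq_bigl => x. by case: (x.2).
rewrite exchange_big /=. apply: eq_bigr => v _. by rewrite big_distrr.
Qed.

Lemma reidx k B (G : nat -> nat) : 0 < k ->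
  \sum_(v < B.*2 | (2 * k) %| v) G v = \sum_(w < B | k %| w) G (2 * w).
Proof.
move=> k0; rewrite big_mkcond [RHS]big_mkcond /=.
elim: B => [|B IH]; first by rewrite !big_ord0.
rewrite doubleS !big_ord_recr /= IH -addnA; congr (_ + _).
have -> : (2 * k %| (B.*2).+1) = false.
  apply/negP => H. have : 2 %| (B.*2).+1 by apply: dvdn_trans H; apply: dvdn_mulr.
  by rewrite dvdn2 /= odd_double.
by rewrite addn0 -mul2n dvdn_pmul2l.
Qed.

Lemma main_nat k n : (1 <= k)%N -> (ov k n + nov (2 * k) n)%N = nov k n.
Proof.
move=> hk.
rewrite (ov_dec k n n.+1) // (nov_dec k n n.+1) // (nov_dec (2 * k) n (n.+1).*2); last first.
  by rewrite -addnn ltn_addr.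
rewrite (reidx k n.+1 (fun v => v * N v n)) // -big_split /=. apply: eq_bigr => v _.
case: (posnP v) => [->|v0]; first by rewrite !mul0n.
by rewrite -(key v n v0) mulnDr mulnA (mulnC v 2).
Qed.

Local Open Scope ring_scope.

Theorem mainTheorem3 (k n : nat) (hk : (1 <= k)%N) :
  (ov k n)%:Z = (nov k n)%:Z - (nov (2 * k) n)%:Z.
Proof. by rewrite -(main_nat k n hk) PoszD GRing.addrK. Qed.
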